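(* Let $\mathbf X\in\mathbb R^{n\times T}$, $k\le\min(n,T)$, $\mathbf W\in\mathbb R^{k\times n}$. Then $$\min_{\mathbf Y\in\mathbb R^{k\times T}}\max_{\mathbf M\in\mathbb R^{k\times k}}G(\mathbf Y,\mathbf M)=\max_{\mathbf M\in\mathbb R^{k\times k}}\min_{\mathbf Y\in\mathbb R^{k\times T}}G(\mathbf Y,\mathbf M)=-\frac2{T^{1/2}}\mathrm{Tr}\big((\mathbf W\mathbf X\mathbf X^\top\mathbf W^\top)^{1/2}\big),$$ where $G(\mathbf Y,\mathbf M)=-\frac2T\mathrm{Tr}(\mathbf X^\top\mathbf W^\top\mathbf Y)+\mathrm{Tr}\big(\mathbf M(\frac1T\mathbf Y\mathbf Y^\top-\mathbf I)\big)$. Consequently, with $L_{PSW}(\mathbf W,\mathbf M,\mathbf Y)=G(\mathbf Y,\mathbf M)+\mathrm{Tr}(\mathbf W^\top\mathbf W)$, one has $\max_{\mathbf M}\min_{\mathbf Y}L_{PSW}=\mathrm{Tr}\big(-\frac2{T^{1/2}}(\mathbf W\mathbf X\mathbf X^\top\mathbf W^\top)^{1/2}+\mathbf W\mathbf W^\top\big)$.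
   Context: Matrix square roots of positive semidefinite matrices are the positive semidefinite ones. *)

(* Defs.v *)
(* real closed field R (the statement is first-order over the
   reals, so it is stated for every rcfType, which includes the real numbers). *)
From HB Require Import structures.
From mathcomp Require Import all_boot all_order all_algebra.
Set Implicit Arguments. Unset Strict Implicit. Unset Printing Implicit Defensive.
Import Order.TTheory GRing.Theory Num.Theory.
Local Open Scope ring_scope.

Section Defs.
Variable R : rcfType.

Definition psd (p : nat) (A : 'M[R]_p) : Prop :=
  A^T = A /\ forall x : 'cV[R]_p, 0 <= (x^T *m A *m x) ord0 ord0.

Definition is_psd_sqrt (p : nat) (A S : 'M[R]_p) : Prop :=
  psd S /\ S *m S = A.

Definition is_max_of (U : Type) (f : U -> R) (v : R) : Prop :=
  (exists u, f u = v) /\ forall u, f u <= v.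
Definition is_min_of (U : Type) (f : U -> R) (v : R) : Prop :=
  (exists u, f u = v) /\ forall u, v <= f u.

(* min_a max_b f a b = v, inner max read in the extended reals
   (sup_b f a b may be +oo); the outer min is attained at some a whose
   inner max is attained and equals v. *)
Definition minmax_eq (A B : Type) (f : A -> B -> R) (v : R) : Prop :=
  (exists a, is_max_of (f a) v) /\
  (forall a w, w < v -> exists b, w < f a b).

Definition maxmin_eq (A B : Type) (f : A -> B -> R) (v : R) : Prop :=
  (exists b, is_min_of (fun a => f a b) v) /\
  (forall b w, v < w -> exists a, f a b < w).

Definition Gfun (n T k : nat) (X : 'M[R]_(n, T)) (W : 'M[R]_(k, n))
    (Y : 'M[R]_(k, T)) (M : 'M[R]_k) : R :=
  - (2 / T%:R) * \tr (X^T *m W^T *m Y)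
  + \tr (M *m ((T%:R)^-1 *: (Y *m Y^T) - 1%:M)).

Definition L_PSW (n T k : nat) (X : 'M[R]_(n, T)) (W : 'M[R]_(k, n))
    (M : 'M[R]_k) (Y : 'M[R]_(k, T)) : R :=
  Gfun X W Y M + \tr (W^T *m W).

End Defs.

(* Main.v *)
Require Import Defs.
From HB Require Import structures.
From mathcomp Require Import all_boot all_order all_algebra.
From mathcomp Require Import ring lra.
Import Order.TTheory GRing.Theory Num.Theory.
Local Open Scope ring_scope.

Set Implicit Arguments. Unset Strict Implicit. Unset Printing Implicit Defensive.

Section Aux.
Variable R : rcfType.

Lemma mmt_diag m n (M : 'M[R]_(m, n)) i : (M *m M^T) i i = \sum_j M i j ^+ 2.
Proof. by rewrite !mxE; apply: eq_bigr => j _; rewrite mxE expr2. Qed.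

Lemma mmt_eq0 m n (M : 'M[R]_(m, n)) : M *m M^T = 0 -> M = 0.
Proof.
move=> H; apply/matrixP => i j; rewrite mxE.
have := mmt_diag M i; rewrite H mxE => /esym /eqP.
rewrite psumr_eq0 => [/allP /(_ j) |]; last by move=> *; rewrite sqr_ge0.
by rewrite mem_index_enum sqrf_eq0 => /(_ isT) /eqP.
Qed.

Lemma rv_pos n (x : 'rV[R]_n) : x != 0 -> 0 < (x *m x^T) 0 0.
Proof.
move=> xn0; rewrite lt0r mmt_diag sumr_ge0 ?andbT => [|j _]; last by rewrite sqr_ge0.
apply: contra xn0 => /eqP H; apply/eqP; apply: mmt_eq0.
apply/matrixP => i j; rewrite !ord1 [RHS]mxE.
by rewrite mmt_diag H.
Qed.

Lemma rv_normalize n (x : 'rV[R]_n) : x != 0 ->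
  exists c : R, (c *: x) *m (c *: x)^T = 1%:M.
Proof.
move=> xn0; have hp := rv_pos xn0.
exists (Num.sqrt ((x *m x^T) 0 0))^-1.
apply/matrixP => i j; rewrite !ord1 linearZ /= -scalemxAl -scalemxAr !mxE.
move: hp; rewrite mxE => hp.
by rewrite eqxx mulrA -expr2 exprVn sqr_sqrtr ?ltW // mulVf ?gt_eqF.
Qed.

End Aux.

Section GS.
Variable R : rcfType.



Lemma ker_vec q T (K : 'M[R]_(q, T)) : (\rank K < T)%N ->
  exists x : 'rV[R]_T, x != 0 /\ x *m K^T = 0.
Proof.
move=> hK.
have hk : kermx K^T != 0.
  by rewrite -mxrank_eq0 mxrank_ker mxrank_tr -lt0n subn_gt0.
have [i Hi] : exists i, row i (kermx K^T) != 0.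
  apply/existsP; apply: contraT; rewrite negb_exists => /forallP Hall.
  suff h0 : kermx K^T == 0 by rewrite h0 in hk.
  apply/eqP/row_matrixP => i; rewrite row0.
  by apply/eqP; have := Hall i; rewrite negbK.
by exists (row i (kermx K^T)); split => //; rewrite -row_mul mulmx_ker row0.
Qed.

Lemma rank_col q1 q2 T (A : 'M[R]_(q1,T)) (B : 'M_(q2,T)) :
  (\rank (col_mx A B) <= \rank A + \rank B)%N.
Proof. rewrite -addsmxE. exact: mxrank_adds_leqif. Qed.

Lemma GS p T (U : 'M[R]_(p, T)) m : forall B : 'M[R]_(m, T),
  B *m U^T = 0 -> (m + \rank U <= T)%N ->
  exists (L : 'M[R]_m) (N : 'M[R]_(m, T)),
    N *m N^T = 1%:M /\ N *m U^T = 0 /\ B = L *m N.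
Proof.
elim: m => [|m IH] B hBU hm.
  by exists 0, 0; split; [apply/matrixP => [[]]|split; rewrite ?flatmx0].
move: B hBU hm; change (m.+1) with (1 + m)%N => B hBU hm.
have hm' : (m + \rank U <= T)%N by apply: leq_trans hm; rewrite leq_add2r.
pose b : 'rV_T := usubmx (B : 'M_(1 + m, T)).
pose B' : 'M_(m, T) := dsubmx (B : 'M_(1 + m, T)).
have hB : B = col_mx b B' by rewrite vsubmxK.
have : col_mx b B' *m U^T = 0 by rewrite -hB.
rewrite mul_col_mx => /eqP; rewrite col_mx_eq0 => /andP[/eqP hb /eqP hB'].
have [L' [N' [hNN [hNU hBL]]]] := IH B' hB' hm'.
pose d := b - b *m N'^T *m N'.
have hdN : d *m N'^T = 0.
  by rewrite /d mulmxBl -!mulmxA hNN mulmx1 subrr.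
have hdU : d *m U^T = 0.
  by rewrite /d mulmxBl hb -!mulmxA hNU !mulmx0 subrr.
have [n0 [a [hnn [hnN [hnU hd]]]]] : exists (n0 : 'rV_T) (a : R),
    n0 *m n0^T = 1%:M /\ n0 *m N'^T = 0 /\ n0 *m U^T = 0 /\ d = a *: n0.
  have [dz|dnz] := eqVneq d 0.
    have hK : (\rank (col_mx N' U) < T)%N.
      apply: leq_ltn_trans (rank_col _ _) _.
      apply: leq_trans hm; rewrite addSn ltnS leq_add2r; exact: rank_leq_row.
    have [x [xn0 hx]] := ker_vec hK.
    move: hx; rewrite tr_col_mx mul_mx_row => /eqP; rewrite -row_mx0 => /eqP.
    case/eq_row_mx => hx1 hx2.
    have [c hc] := rv_normalize xn0.
    exists (c *: x), 0; split => //; split; first by rewrite -scalemxAl hx1 scaler0.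
    by split; [rewrite -scalemxAl hx2 scaler0 | rewrite dz scale0r].
  have [c hc] := rv_normalize dnz.
  have c0 : c != 0.
    apply/eqP => c0; move: hc; rewrite c0 scale0r mul0mx => /matrixP /(_ 0 0).
    by rewrite !mxE /= => /eqP; rewrite eq_sym oner_eq0.
  exists (c *: d), c^-1; split => //; split; first by rewrite -scalemxAl hdN scaler0.
  by split; [rewrite -scalemxAl hdU scaler0 | rewrite scalerA mulVf // scale1r].
exists (col_mx (row_mx a%:M (b *m N'^T)) (row_mx 0 L')), (col_mx n0 N').
split.
  rewrite tr_col_mx mul_col_row hnn hNN.
  rewrite (_ : N' *m n0^T = 0); last by rewrite -(trmxK (N' *m _)) trmx_mul trmxK hnN trmx0.
  by rewrite hnN scalar_mx_block.
split; first by rewrite mul_col_mx hnU hNU col_mx0.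
rewrite mul_col_mx !mul_row_col mul0mx add0r -hBL hB; congr col_mx.
by rewrite mul_scalar_mx -hd /d subrK.
Qed.

End GS.

Section Polar.
Variable R : rcfType.

Lemma trT_mul m n p (A : 'M[R]_(m,n)) (B : 'M_(p,n)) : A *m B^T = 0 -> B *m A^T = 0.
Proof. by move=> h; rewrite -(trmxK (B *m _)) trmx_mul trmxK h trmx0. Qed.

Lemma polar k T (A : 'M[R]_(k, T)) (S : 'M[R]_k) : (k <= T)%N -> S^T = S ->
  S *m S = A *m A^T -> exists Q : 'M[R]_(k, T), Q *m Q^T = 1%:M /\ S *m Q = A.
Proof.
move=> hkT hST hSS.
set r := \rank S.
have hrk : (r <= k)%N by apply: rank_leq_row.
case: (@GS R 0%N k 0 r (row_base S)) => [||L [V [hVV [_ hBL]]]];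
  [by rewrite trmx0 mulmx0 | by rewrite mxrank0 addn0 |].
have hrB : \rank (row_base S) = r := (eq_row_base S).1.
have hLu : L \in unitmx.
  rewrite -row_free_unit /row_free eqn_leq rank_leq_row /= -{1}hrB hBL.
  exact: mxrankM_maxl.
have hSV : (S <= V)%MS.
  by rewrite -((eq_row_base S).2 _ V).1 hBL submxMl.
pose Pi := V^T *m V.
have hPiT : Pi^T = Pi by rewrite /Pi trmx_mul trmxK.
have hSPi : S *m Pi = S.
  have hX := mulmxKpV hSV; set X := S *m pinvmx V in hX.
  by rewrite -{1}hX /Pi !mulmxA -(mulmxA X) hVV mulmx1 hX.
have hPiS : Pi *m S = S.
  by rewrite -[LHS]trmxK trmx_mul hPiT hST hSPi.
pose S1 := V *m S *m V^T.
have hS1T : S1^T = S1 by rewrite /S1 !trmx_mul trmxK hST mulmxA.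
have hSd : S = V^T *m S1 *m V.
  by rewrite /S1 !mulmxA -/Pi -(mulmxA _ V^T) -/Pi hPiS hSPi.
have hS1u : S1 \in unitmx.
  rewrite -row_free_unit /row_free eqn_leq rank_leq_row /=.
  rewrite /r {1}hSd; apply: leq_trans (mxrankM_maxl _ _) _; exact: mxrankM_maxr.
have hPA : A = Pi *m A.
  apply/eqP; rewrite -subr_eq0 -{1}(mul1mx A) -mulmxBl; apply/eqP/mmt_eq0.
  rewrite trmx_mul mulmxA -(mulmxA _ A) -hSS raddfB /= trmx1 hPiT.
  have h1 : (1%:M - Pi) *m S = 0 by rewrite mulmxBl mul1mx hPiS subrr.
  have h2 : S *m (1%:M - Pi) = 0 by rewrite mulmxBr mulmx1 hSPi subrr.
  by rewrite mulmxA h1 !mul0mx.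
have hrA : (\rank A <= r)%N.
  rewrite hPA /Pi -mulmxA; apply: leq_trans (mxrankM_maxl _ _) _.
  by rewrite mxrank_tr rank_leq_row.
case: (@GS R k T A (k - r) 0) => [||N' [N [hNN [hNA _]]]];
  [by rewrite mul0mx | by apply: leq_trans hkT; rewrite -[X in (_ <= X)%N](subnK hrk) leq_add2l |].
case: (@GS R r k V (k - r) 0) => [||W' [W [hWW [hWV _]]]];
  [by rewrite mul0mx | by rewrite -[X in (_ <= X)%N](subnK hrk) leq_add2l rank_leq_row |].
have hsum : Pi + W^T *m W = 1%:M.
  pose E := 1%:M - Pi - W^T *m W.
  have hX : col_mx V W *m (col_mx V W)^T = 1%:M.
    by rewrite tr_col_mx mul_col_row hVV hWW hWV (trT_mul hWV) scalar_mx_block.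
  have hfree : row_free (col_mx V W)^T.
    rewrite /row_free mxrank_tr eqn_leq rank_leq_col /=.
    rewrite -{1}(subnKC hrk) -{1}(mxrank1 R (r + (k - r))%N) -hX.
    exact: mxrankM_maxl.
  have hE : E *m (col_mx V W)^T == 0.
    rewrite tr_col_mx mul_mx_row /E !mulmxBl mul1mx -!mulmxA hVV.
    rewrite mul1mx !mulmx1 hWV hWW !mulmx0 mulmx1 !subr0 !subrr.
    by rewrite (trT_mul hWV) mulmx0 subr0 subrr row_mx0.
  move: hE; rewrite mulmx_free_eq0 // /E => /eqP.
  by move/eqP; rewrite subr_eq0 => /eqP <-; rewrite addrC subrK.
have hSVT : S *m V^T = V^T *m S1 by rewrite -{1}hPiS /Pi /S1 !mulmxA.
have hSWT : S *m W^T = 0.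
  by rewrite -hSPi /Pi -!mulmxA (trT_mul hWV) !mulmx0.
have hAA : V *m A *m A^T *m V^T = S1 *m S1.
  by rewrite -(mulmxA V A) -hSS -{1}hSPi /Pi /S1 !mulmxA.
have hAN : A *m N^T = 0 := trT_mul hNA.
exists (V^T *m invmx S1 *m V *m A + W^T *m N); split; last first.
  rewrite mulmxDr !mulmxA hSVT hSWT mul0mx addr0 -(mulmxA V^T S1) mulmxV //.
  by rewrite mulmx1 -/Pi -hPA.
rewrite raddfD /= !trmx_mul !trmxK trmx_inv hS1T.
rewrite mulmxDl !mulmxDr.
have e1 p (Z : 'M_(r,p)) : V *m (A *m (A^T *m (V^T *m Z))) = S1 *m (S1 *m Z).
  by rewrite (mulmxA V) (mulmxA (V *m A)) (mulmxA _ V^T) hAA mulmxA.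
have e2 p (Z : 'M_(k - r,p)) : A *m (N^T *m Z) = 0 by rewrite mulmxA hAN mul0mx.
have e3 p (Z : 'M_(k,p)) : N *m (A^T *m Z) = 0 by rewrite mulmxA hNA mul0mx.
have e4 p (Z : 'M_(k - r,p)) : N *m (N^T *m Z) = Z by rewrite mulmxA hNN mul1mx.
rewrite -!mulmxA e1 e2 e3 e4 !mulmx0 addr0 add0r.
rewrite (mulmxA (invmx S1) S1) mulVmx // mul1mx (mulmxA S1) mulmxV // mul1mx.
exact: hsum.
Qed.
End Polar.

Section Main.
Variable R : rcfType.

Lemma tr_psd k T (S : 'M[R]_k) (Z : 'M[R]_(k, T)) : psd S ->
  0 <= \tr (Z^T *m S *m Z).
Proof.
case=> _ hpos; rewrite /mxtrace; apply: sumr_ge0 => j _.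
have := hpos (col j Z).
suff -> : ((col j Z)^T *m S *m col j Z) 0 0 = (Z^T *m S *m Z) j j by [].
rewrite !mxE; apply: eq_bigr => l _; rewrite !mxE; congr (_ * _).
by apply: eq_bigr => m _; rewrite !mxE.
Qed.

Lemma maxmin_shift (A B : Type) (f : A -> B -> R) v c :
  maxmin_eq f v -> maxmin_eq (fun a b => f a b + c) (v + c).
Proof.
case=> [[b [[a ha] hb]] h2]; split.
  by exists b; split; [exists a; rewrite ha | move=> u; rewrite lerD2r].
move=> b' w hw; have hw' : v < w - c by rewrite ltrBrDr.
by have [a' ha'] := h2 b' _ hw'; exists a'; rewrite -ltrBrDr.
Qed.

End Main.


Unset Implicit Arguments. Set Strict Implicit.
Lemma tr0 (R : rcfType) (A : 'M[R]_0) : \tr A = 0.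
Proof. by rewrite /mxtrace big_ord0. Qed.

Theorem proposition5 (R : rcfType) (n T k : nat)
  (X : 'M[R]_(n, T)) (W : 'M[R]_(k, n)) (S : 'M[R]_k) :
  (k <= minn n T)%N ->
  is_psd_sqrt (W *m X *m X^T *m W^T) S ->
  minmax_eq (fun (Y : 'M[R]_(k, T)) (M : 'M[R]_k) => Gfun X W Y M)
            (- (2 / Num.sqrt (T%:R)) * \tr S) /\
  maxmin_eq (fun (Y : 'M[R]_(k, T)) (M : 'M[R]_k) => Gfun X W Y M)
            (- (2 / Num.sqrt (T%:R)) * \tr S) /\
  maxmin_eq (fun (Y : 'M[R]_(k, T)) (M : 'M[R]_k) => L_PSW X W M Y)
            (\tr (- (2 / Num.sqrt (T%:R)) *: S + W *m W^T)).
Proof.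
move=> hk [hpsd hSS].
have hL : forall Y M, L_PSW X W M Y = Gfun X W Y M + \tr (W^T *m W) by [].
have hv3 : \tr (- (2 / Num.sqrt (T%:R)) *: S + W *m W^T) =
    - (2 / Num.sqrt (T%:R)) * \tr S + \tr (W^T *m W).
  by rewrite raddfD /= mxtraceZ mxtrace_mulC.
suff [h1 h2] : minmax_eq (fun (Y : 'M[R]_(k, T)) (M : 'M[R]_k) => Gfun X W Y M)
            (- (2 / Num.sqrt (T%:R)) * \tr S) /\
  maxmin_eq (fun (Y : 'M[R]_(k, T)) (M : 'M[R]_k) => Gfun X W Y M)
            (- (2 / Num.sqrt (T%:R)) * \tr S).
  by split => //; split => //; rewrite hv3; exact: maxmin_shift.
case: hpsd => hST hpos.
set A := W *m X.
have hSSA : S *m S = A *m A^T by rewrite hSS /A trmx_mul !mulmxA.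
have hGf : forall Y M, Gfun X W Y M = - (2 / T%:R) * \tr (A^T *m Y)
   + \tr (M *m ((T%:R)^-1 *: (Y *m Y^T) - 1%:M)).
  by move=> Y M; rewrite /Gfun /A trmx_mul.
have [T0|Tpos] := posnP T.
  subst T; move: hk; rewrite minn0 leqn0 => /eqP k0; subst k.
  have hG0 : forall Y M, Gfun X W Y M = 0.
    by move=> Y M; rewrite hGf !tr0 mulr0 addr0.
  rewrite tr0 mulr0; split.
    split; first by exists 0; split; [exists 0; rewrite hG0 | move=> u; rewrite hG0].
    by move=> a w hw; exists 0; rewrite hG0.
  split; first by exists 0; split; [exists 0; rewrite hG0 | move=> u; rewrite hG0].
  by move=> a w hw; exists 0; rewrite hG0.
have hkT : (k <= T)%N by apply: leq_trans hk (geq_minr n T).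
have [Q [hQQ hSQ]] := polar hkT hST hSSA.
set c : R := T%:R.
have hc : 0 < c by rewrite ltr0n.
set sT := Num.sqrt c.
have hsT : 0 < sT by rewrite sqrtr_gt0.
have hsT2 : c = sT ^+ 2 by rewrite sqr_sqrtr // ltW.
have hAt : A^T = Q^T *m S by rewrite -hSQ trmx_mul hST.
have htrAQ : \tr (A^T *m Q) = \tr S.
  by rewrite hAt -mulmxA mxtrace_mulC -mulmxA hQQ mulmx1.
set v := - (2 / sT) * \tr S.
pose Ys := sT *: Q.
have hGY : forall M, Gfun X W Ys M = v.
  move=> M; rewrite hGf /Ys [(_ *: Q)^T]linearZ /= -scalemxAl -!scalemxAr scalerA hQQ.
  rewrite scalerA -mulrA -expr2 -hsT2 mulVf ?gt_eqF // scale1r subrr mulmx0 mxtrace0 addr0.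
  rewrite mxtraceZ htrAQ /v -/c hsT2; field.
  by rewrite gt_eqF.
pose Ms := sT^-1 *: S.
have hC : forall Y, v <= Gfun X W Y Ms.
  move=> Y; have h0 := tr_psd (Y - sT *: Q) (conj hST hpos).
  have t1 : \tr (Y^T *m S *m Y) = \tr (S *m (Y *m Y^T)).
    by rewrite -mulmxA mxtrace_mulC -mulmxA.
  have t2 : \tr (Y^T *m S *m Q) = \tr (A^T *m Y).
    by rewrite -mulmxA hSQ -mxtrace_tr trmx_mul trmxK.
  have t3 : \tr (Q^T *m S *m Y) = \tr (A^T *m Y) by rewrite hAt.
  have t4 : \tr (Q^T *m S *m Q) = \tr S by rewrite -hAt.
  move: h0; rewrite [(Y - _)^T]raddfB /= [(_ *: Q)^T]linearZ /= mulmxBl mulmxBl !mulmxBr.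
  rewrite -!scalemxAl -!scalemxAr !raddfB /= !mxtraceZ t1 t2 t3 t4.
  rewrite hGf /Ms -scalemxAl mxtraceZ mulmxBr mulmx1 raddfB /= -scalemxAr mxtraceZ.
  rewrite /v -/c hsT2 => h0.
  rewrite -subr_ge0.
  set q := \tr (S *m (Y *m Y^T)); set a := \tr (A^T *m Y); set s := \tr S.
  move: h0; rewrite -/q -/a -/s => h0.
  have -> : - (2 / sT ^+ 2) * a + sT^-1 * (sT ^- 2 * q - s) - - (2 / sT) * s
     = (q - sT * a + (- (sT * a) - - (sT * (sT * s)))) / sT ^+ 3.
    by field; rewrite gt_eqF.
  by rewrite divr_ge0 // exprn_ge0 // ltW.
split.
  split; first by exists Ys; split; [exists 0; rewrite hGY | move=> u; rewrite hGY].
  by move=> Y w hw; exists Ms; apply: lt_le_trans hw (hC Y).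
split; first by exists Ms; split; [exists Ys; rewrite hGY | exact: hC].
by move=> M w hw; exists Ys; rewrite hGY.
Qed.
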